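(* Let $\phi:\mathbb{R}\to\mathbb{R}$ be differentiable and $f(z)=W_d\phi(W_{d-1}\phi(\cdots\phi(W_1z)\cdots))$ with $W_i\in\mathbb{R}^{k_i\times k_{i-1}}$, $k_d=k_0$. Let $x\in\mathbb{R}^{k_0}$ with $\|x\|_2=1$, and run gradient descent with learning rate $\gamma>0$ on $\mathcal{L}(x,f)=\frac12\|x-f(x)\|_2^2$. Suppose $W_d^{(0)}=x{a^{(0)}}^T$, $W_1^{(0)}=b^{(0)}x^T$ with $a^{(0)}\in\mathbb{R}^{k_{d-1}}$, $b^{(0)}\in\mathbb{R}^{k_1}$ such that $a_j^{(0)}=a_1^{(0)}$ for all $j$ and $b_l^{(0)}=b_1^{(0)}$ for all $l$, and $W_i^{(0)}=w_i^{(0)}\mathbf{1}_{k_i\times k_{i-1}}$ with $w_i^{(0)}\in\mathbb{R}$ for $i\in\{2,\dots,d-1\}$. Then for all time steps $t$, $W_d^{(t)}=x{a^{(t)}}^T$, $W_1^{(t)}=b^{(t)}x^T$ with $a_j^{(t)}=a_1^{(t)}$ for all $j\in[k_{d-1}]$, $b_l^{(t)}=b_1^{(t)}$ for all $l\in[k_1]$, and $W_i^{(t)}=w_i^{(t)}\mathbf{1}_{k_i\times k_{i-1}}$ for some $w_i^{(t)}\in\mathbb{R}$, $i\in\{2,\dots,d-1\}$.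
   Context: $\phi$ is applied coordinatewise; $\mathbf{1}_{m\times n}$ is the $m\times n$ all-ones matrix. Gradient descent updates each $W_i\leftarrow W_i-\gamma\nabla_{W_i}\mathcal{L}$ simultaneously. *)

(* Defs.v *)
From HB Require Import structures.
From mathcomp Require Import all_boot all_order all_algebra.
From mathcomp Require Import all_classical all_reals all_analysis.
Set Implicit Arguments. Unset Strict Implicit. Unset Printing Implicit Defensive.
Import Order.TTheory GRing.Theory Num.Theory.
Local Open Scope ring_scope.

(* Layers are indexed from 0: layer n is the matrix W n : 'M_(k n.+1, k n),
   which is the paper's W_{n+1}.  Depth d: layers 0 .. d-1 are used. *)
Section Net.
Variables (R : realType) (phi : R -> R) (d : nat) (k : nat -> nat).
Hypothesis hk : k d = k 0%N.

Definition weights := forall n : nat, 'M[R]_(k n.+1, k n).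

Definition act (n : nat) : R -> R := if n == 0%N then id else phi.

Fixpoint pre (W : weights) (z : 'cV[R]_(k 0)) (n : nat) : 'cV[R]_(k n) :=
  match n with
  | 0%N => z
  | n'.+1 => W n' *m map_mx (act n') (pre W z n')
  end.

Definition net (W : weights) (z : 'cV[R]_(k 0)) : 'cV[R]_(k 0) :=
  castmx (hk, erefl 1%N) (pre W z d).

Definition loss (x : 'cV[R]_(k 0)) (W : weights) : R :=
  2^-1 * \sum_(j < k 0) (x j 0 - net W x j 0) ^+ 2.

Definition unit_dir (i a b : nat) : weights :=
  fun n => \matrix_(p, q) (((n == i) && (p == a :> nat) && (q == b :> nat))%:R : R).

Definition grad (x : 'cV[R]_(k 0)) (W : weights) : weights :=
  fun i => \matrix_(a, b)
    derive1 (fun s : R => loss x (fun n => W n + s *: unit_dir i a b n)) 0.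

Definition gd_step (gamma : R) (x : 'cV[R]_(k 0)) (W : weights) : weights :=
  fun n => W n - gamma *: grad x W n.

Fixpoint gd (gamma : R) (x : 'cV[R]_(k 0)) (W0 : weights) (t : nat) : weights :=
  match t with
  | 0%N => W0
  | t'.+1 => gd_step gamma x (gd gamma x W0 t')
  end.

End Net.

(* Main.v *)
Require Import Defs.
From HB Require Import structures.
From mathcomp Require Import all_boot all_order all_algebra.
From mathcomp Require Import all_classical all_reals all_analysis.
From mathcomp Require Import ring lra.
From mathcomp Require Import perm.
Import Order.TTheory GRing.Theory Num.Theory.
Local Open Scope ring_scope.

Section Aux.
Variables (R : realType) (phi : R -> R) (k : nat -> nat) (x : 'cV[R]_(k 0%N)).
Variable W : weights R k.

Fixpoint preA (V : forall n, 'cV[R]_(k n.+1)) (n : nat) : 'cV[R]_(k n) :=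
  match n with
  | 0%N => x
  | n'.+1 => W n' *m map_mx (act phi n') (preA V n') + V n'
  end.

Definition dl (i a : nat) (u : R) : forall n, 'cV[R]_(k n.+1) :=
  fun n => \col_p (((n == i) && (p == a :> nat))%:R * u).

Lemma preA_low i a u n : (n <= i)%N -> preA (dl i a u) n = pre phi W x n.
Proof.
elim: n => [//|n IH] hn /=.
rewrite IH ?(ltnW hn) //.
have -> : dl i a u n = 0.
  apply/matrixP => p q; rewrite !mxE.
  by rewrite (_ : (n == i) = false) ?mul0r //; apply/negbTE; rewrite neq_ltn hn.
by rewrite addr0.
Qed.

Lemma pre_pert i a (b : 'I_(k i)) s n :
  pre phi (fun n => W n + s *: unit_dir R k i a b n) x n =
  preA (dl i a (s * act phi i (pre phi W x i b 0))) n.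
Proof.
elim: n => [//|n IH] /=.
rewrite IH mulmxDl; congr (_ + _).
apply/matrixP => p q; rewrite !mxE.
case: (eqVneq n i) => [en|nen]; last first.
  rewrite big1 ?mul0r // => j _; rewrite !mxE.
  by rewrite (negbTE nen) /= mulr0 mul0r.
subst n; rewrite (bigD1 b) //= big1 ?addr0.
  by rewrite !mxE !eqxx andbT /= preA_low // (ord1 q) mulrCA mulrA.
move=> j /negbTE jb; rewrite !mxE.
by rewrite (_ : (j == b :> nat) = false) ?andbF ?mulr0 ?mul0r.
Qed.

Variables (d : nat) (hk : k d = k 0%N).
Hypothesis hphi : forall z : R, derivable phi z 1.

Definition Phi (i a : nat) (u : R) : R :=
  2^-1 * \sum_(j < k 0%N) (x j 0 - castmx (hk, erefl 1%N) (preA (dl i a u) d) j 0) ^+ 2.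

Lemma derivable_mulc (c z : R) : derivable (fun u : R => c * u) z 1.
Proof.
have H : is_derive z (1:R) (fun u : R => c * u) (c * 1).
  by apply: is_derive_eq.
exact: ex_derive.
Qed.

Lemma derivable_comp1 (f g : R -> R) z :
  derivable f z 1 -> derivable g (f z) 1 -> derivable (fun u => g (f u)) z 1.
Proof.
move=> /derivable1_diffP df /derivable1_diffP dg; apply/derivable1_diffP.
exact: (differentiable_comp df dg).
Qed.

Lemma derivable_act n z : derivable (act phi n) z 1.
Proof. rewrite /act; case: (n == 0%N) => //; exact: derivable_id. Qed.

Lemma derivable_sum1 n (h : 'I_n -> R -> R) z :
  (forall j, derivable (h j) z 1) -> derivable (fun u => \sum_(j < n) h j u) z 1.
Proof. by move=> H; rewrite -fct_sumE; apply: derivable_sum. Qed.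

Lemma derivable_preA i a n p z :
  derivable (fun u => preA (dl i a u) n p 0) z 1.
Proof.
elim: n p => [|n IH] p /=.
  exact: derivable_cst.
have -> : (fun u => (W n *m map_mx (act phi n) (preA (dl i a u) n) + dl i a u n) p 0)
  = (fun u => \sum_j W n p j * act phi n (preA (dl i a u) n j 0)
         + ((n == i) && (p == a :> nat))%:R * u).
  by apply/funext => u; rewrite !mxE; congr (_ + _); apply: eq_bigr => j _; rewrite !mxE.
apply: (@derivableD _ _ _ (fun u => \sum_j W n p j * act phi n (preA (dl i a u) n j 0))
   (fun u => ((n == i) && (p == a :> nat))%:R * u)).
  apply: derivable_sum1 => j.
  apply: (@derivableM _ _ (cst (W n p j)) (fun u => act phi n (preA (dl i a u) n j 0))).
    exact: derivable_cst.
  apply: derivable_comp1 => //; exact: derivable_act.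
exact: derivable_mulc.
Qed.

Lemma dD (f g : R -> R) z : derivable f z 1 -> derivable g z 1 ->
  derivable (fun u => f u + g u) z 1.
Proof. move=> H1 H2; exact: (derivableD H1 H2). Qed.
Lemma dB (f g : R -> R) z : derivable f z 1 -> derivable g z 1 ->
  derivable (fun u => f u - g u) z 1.
Proof. move=> H1 H2; exact: (derivableB H1 H2). Qed.
Lemma dM (f g : R -> R) z : derivable f z 1 -> derivable g z 1 ->
  derivable (fun u => f u * g u) z 1.
Proof. move=> H1 H2; exact: (derivableM H1 H2). Qed.
Lemma dC (c z : R) : derivable (fun _ : R => c) z 1.
Proof. exact: derivable_cst. Qed.

Lemma derivable_Phi i a z : derivable (Phi i a) z 1.
Proof.
have -> : Phi i a = (fun u => 2^-1 * \sum_(j < k 0%N)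
   ((x j 0 - preA (dl i a u) d (cast_ord (esym hk) j) 0) *
    (x j 0 - preA (dl i a u) d (cast_ord (esym hk) j) 0))).
  apply/funext => u; rewrite /Phi; congr (_ * _); apply: eq_bigr => j _.
  by rewrite castmxE expr2 /= cast_ord_id.
apply: dM; first exact: dC.
apply: derivable_sum1 => j.
apply: dM; (apply: dB; [exact: dC| exact: derivable_preA]).
Qed.

Lemma grad_form i (a : 'I_(k i.+1)) (b : 'I_(k i)) :
  grad phi hk x W i a b = act phi i (pre phi W x i b 0) * derive1 (Phi i a) 0.
Proof.
rewrite /grad mxE.
set h := act phi i (pre phi W x i b 0).
have -> : (fun s => loss phi hk x (fun n => W n + s *: unit_dir R k i a b n))
   = Phi i a \o (fun s => s * h).
  by apply/funext => s; rewrite /loss /net /Phi /= pre_pert.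
have H : is_derive (0:R) 1 (fun s : R => s * h) h.
  by apply: is_derive_eq; rewrite scale0r add0r; exact: mulr1.
rewrite derive1_comp; first last.
- by rewrite mul0r; apply: derivable_Phi.
- exact: ex_derive.
have H' : derive1 (fun s : R => s * h) 0 = h by rewrite derive1E derive_val.
by rewrite H' mul0r mulrC.
Qed.

Lemma dl_off i a u n : n != i -> dl i a u n = 0.
Proof. by move=> /negbTE h; apply/matrixP => p q; rewrite !mxE h mul0r. Qed.

Lemma tperm_eq1 m' (a a' j : 'I_m') : (tperm a a' j == a) = (j == a').
Proof.
case: tpermP => [->|->|/eqP/negbTE -> /eqP/negbTE ->]; by rewrite ?eqxx // eq_sym.
Qed.

Lemma Phi_indep i (a a' : 'I_(k i.+1)) : (i.+2 <= d)%N ->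
  (forall p p' q, W i p q = W i p' q) ->
  (forall p q q', W i.+1 p q = W i.+1 p q') -> Phi i a = Phi i a'.
Proof.
move=> hd rowsEq colsEq.
have key : forall n u, (i.+2 <= n)%N -> preA (dl i a u) n = preA (dl i a' u) n.
  move=> n u; elim: n => [//|n IH] hn.
  case: (eqVneq n i.+1) => [en|nen].
    subst n => /=.
    rewrite !preA_low // [dl i a u i.+1]dl_off ?[dl i a' u i.+1]dl_off ?(gtn_eqF (ltnSn i)) //.
    congr (_ + _); apply/matrixP => p q; rewrite !mxE.
    rewrite (reindex_inj (@perm_inj _ (tperm a a'))) /=.
    apply: eq_bigr => j _; rewrite !mxE.
    rewrite (colsEq p (tperm a a' j) j). congr (_ * act phi _ (_ + _)).
      by apply: eq_bigr => l _; rewrite !mxE (rowsEq (tperm a a' j) j).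
    by rewrite eqxx /= (_ : (nat_of_ord (tperm a a' j) == a) = (j == a')) //; exact: tperm_eq1.
  have hn' : (i.+2 <= n)%N by rewrite ltn_neqAle eq_sym nen -ltnS.
  have ni : n != i by rewrite neq_ltn (ltn_trans (ltnSn i) hn') orbT.
  by rewrite /= IH // !dl_off.
apply: funext => u; rewrite /Phi key //.
Qed.

End Aux.

Lemma Phi_last (R : realType) (phi : R -> R) (k : nat -> nat) (x : 'cV[R]_(k 0%N))
  (W : weights R k) (i : nat) (hk : k i.+1 = k 0%N) (a : 'I_(k i.+1)) :
  derive1 (Phi R phi k x W i.+1 hk i a) 0 =
  - (castmx (esym hk, erefl 1%N) x a 0 - pre phi W x i.+1 a 0).
Proof.
set j0 := cast_ord hk a.
set r0 := x j0 0 - pre phi W x i.+1 a 0.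
set S := \sum_(j < k 0%N | j != j0) (x j 0 - pre phi W x i.+1 (cast_ord (esym hk) j) 0) ^+ 2.
have -> : Phi R phi k x W i.+1 hk i a = (fun u => 2^-1 * ((r0 - u) ^+ 2 + S)).
  apply: funext => u; rewrite /Phi; congr (_ * _).
  rewrite (bigD1 j0) //=; congr (_ + _).
    rewrite castmxE /= cast_ord_id /= preA_low // !mxE eqxx /=.
    have ca : cast_ord (esym hk) j0 = a by apply: val_inj.
    by rewrite ca eqxx mul1r /r0 !mxE opprD addrA.
  apply: eq_bigr => j hj; rewrite castmxE /= cast_ord_id /= preA_low // !mxE eqxx /=.
  rewrite (_ : (_ == _) = false) ?mul0r ?addr0 //.
  apply/negbTE; apply: contra hj => /eqP h; apply/eqP/val_inj => /=.
  by rewrite -h.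
have H : is_derive (0:R) 1 (fun u : R => 2^-1 * ((r0 - u) ^+ 2 + S)) (- r0).
  apply: is_derive_eq.
  have E : forall a b : R, a *: b = a * b by [].
  by rewrite !E; field.
have H2 : derive1 (fun u : R => 2^-1 * ((r0 - u) ^+ 2 + S)) 0 = - r0.
  by rewrite derive1E derive_val.
rewrite H2; congr (- (_ - _)); rewrite castmxE /=; congr (x _ _); exact: val_inj.
Qed.

Lemma allEq_const (R : realType) r c (M : 'M[R]_(r, c)) :
  (forall p q p' q', M p q = M p' q') -> exists w, M = const_mx w.
Proof.
case: r M => [|r] M H.
  by exists 0; apply/matrixP => -[i hi]; have := hi; rewrite ltn0.
case: c M H => [|c] M H.
  by exists 0; apply/matrixP => p -[i hi]; have := hi; rewrite ltn0.
by exists (M ord0 ord0); apply/matrixP => p q; rewrite mxE; apply: H.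
Qed.

Definition Inv (R : realType) (m : nat) (k : nat -> nat) (hk : k m.+2 = k 0%N)
  (x : 'cV[R]_(k 0%N)) (W : weights R k) : Prop :=
    (exists a : 'cV[R]_(k m.+1),
        (forall j j' : 'I_(k m.+1), a j 0 = a j' 0) /\
        W m.+1 = castmx (esym hk, erefl 1%N) x *m a^T) /\
    (exists b : 'cV[R]_(k 1%N),
        (forall l l' : 'I_(k 1%N), b l 0 = b l' 0) /\ W 0%N = b *m x^T) /\
    (forall i : nat, (0 < i <= m)%N -> exists w : R, W i = const_mx w).
Arguments Inv {R m k} hk x W.

Lemma Inv_step (R : realType) (phi : R -> R)
  (hphi : forall z : R, derivable phi z 1)
  (m : nat) (k : nat -> nat) (hk : k m.+2 = k 0%N)
  (x : 'cV[R]_(k 0%N)) (gamma : R) (W : weights R k) :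
  Inv hk x W -> Inv hk x (gd_step phi hk gamma x W).
Proof.
move=> [[a [ac Wa]] [[b [bc Wb]] Wc]].
set X := castmx (esym hk, erefl 1%N) x.
have rowsEq : forall i, (i <= m)%N -> forall p p' q, W i p q = W i p' q.
  case=> [|i] hi p p' q.
    by rewrite Wb !mxE !big_ord1 !mxE (bc p p').
  have [w ->] := Wc i.+1 hi.
  by rewrite !mxE.
have colsEq : forall i, (0 < i <= m.+1)%N -> forall p q q', W i p q = W i p q'.
  move=> i /andP [i0 hi] p q q'.
  case: (eqVneq i m.+1) => [ei|nei].
    subst i; by rewrite Wa !mxE !big_ord1 !mxE (ac q q').
  have hi' : (0 < i <= m)%N by rewrite i0 /= -ltnS ltn_neqAle nei.
  have [w ->] := Wc i hi'.
  by rewrite !mxE.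
have preEq : forall i, (i <= m)%N -> forall q q', pre phi W x i.+1 q 0 = pre phi W x i.+1 q' 0.
  move=> i hi q q' /=; rewrite !mxE; apply: eq_bigr => l _.
  by rewrite (rowsEq i hi q q').
have E : forall r c (M N : 'M[R]_(r, c)) p q, (M - gamma *: N) p q = M p q - gamma * N p q.
  by move=> *; rewrite !mxE.
have gf := @grad_form R phi k x W m.+2 hk hphi.
split; [|split].
-
  set h := fun q : 'I_(k m.+1) => phi (pre phi W x m.+1 q 0).
  set s := \sum_q a q 0 * h q.
  exists (\col_q (a q 0 + gamma * (1 - s) * h q)); split.
    move=> j j'; rewrite !mxE (ac j j') /h (preEq m (leqnn m) j j') //.
  apply/matrixP => p q.
  have XaG : forall (v : 'cV[R]_(k m.+1)) p q, (X *m v^T) p q = X p 0 * v q 0.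
    by move=> v p' q'; rewrite !mxE big_ord1 !mxE.
  have Xa : forall p q, W m.+1 p q = X p 0 * a q 0 by move=> p' q'; rewrite Wa XaG.
  rewrite /gd_step E gf Phi_last XaG.
  have -> : pre phi W x m.+2 p 0 = X p 0 * s.
    rewrite /s big_distrr /= [LHS]mxE; apply: eq_bigr => j _.
    by rewrite Xa [map_mx _ _ j 0]mxE /h mulrA.
  have hq : act phi m.+1 (pre phi W x m.+1 q 0) = h q by [].
  have colE : (\col_q (a q 0 + gamma * (1 - s) * h q)) q 0 = a q 0 + gamma * (1 - s) * h q.
    by rewrite mxE.
  rewrite hq colE Xa /X; ring.
-
  set D := fun p : 'I_(k 1%N) => derive1 (Phi R phi k x W m.+2 hk 0%N p) 0.
  exists (\col_p (b p 0 - gamma * D p)); split.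
    move=> l l'; rewrite !mxE (bc l l') /D.
    rewrite (@Phi_indep R phi k x W m.+2 hk _ l l') //.
      exact: rowsEq.
    exact: colsEq.
  apply/matrixP => p q.
  have bxE : forall (v : 'cV[R]_(k 1%N)) p q, (v *m x^T) p q = v p 0 * x q 0.
    by move=> v p' q'; rewrite !mxE big_ord1 !mxE.
  rewrite /gd_step E gf Wb !bxE mxE /D /=; rewrite (_ : act phi 0 (x q 0) = x q 0) //; ring.
-
  case=> [//|i] hi; apply: allEq_const => p q p' q'.
  have him : (i.+1 <= m)%N by case/andP: hi.
  have [w Ww] := Wc i.+1 hi.
  have cE : forall p0 q0, (const_mx w : 'M[R]_(k i.+2, k i.+1)) p0 q0 = w.
    by move=> *; rewrite mxE.
  rewrite /gd_step !E !gf Ww !cE.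
  rewrite (@Phi_indep R phi k x W m.+2 hk _ p p') //.
  - by rewrite (preEq i (ltnW him) q q').
  - exact: rowsEq.
  - by apply: colsEq; rewrite /= ltnS him.
Qed.

(* depth d = m.+2 (d >= 2); layer n (0-based) is the paper's W_{n+1} *)
Theorem mainTheorem10 (R : realType) (phi : R -> R)
  (hphi : forall z : R, derivable phi z 1)
  (m : nat) (k : nat -> nat) (hk : k m.+2 = k 0%N)
  (x : 'cV[R]_(k 0%N)) (hx : \sum_(j < k 0%N) x j 0 ^+ 2 = 1)
  (gamma : R) (hgamma : 0 < gamma)
  (W0 : weights R k)
  (hWd : exists a : 'cV[R]_(k m.+1),
      (forall j j' : 'I_(k m.+1), a j 0 = a j' 0) /\
      W0 m.+1 = castmx (esym hk, erefl 1%N) x *m a^T)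
  (hW1 : exists b : 'cV[R]_(k 1%N),
      (forall l l' : 'I_(k 1%N), b l 0 = b l' 0) /\ W0 0%N = b *m x^T)
  (hWi : forall i : nat, (0 < i <= m)%N -> exists w : R, W0 i = const_mx w) :
  forall t : nat,
    let W := gd phi hk gamma x W0 t in
    (exists a : 'cV[R]_(k m.+1),
        (forall j j' : 'I_(k m.+1), a j 0 = a j' 0) /\
        W m.+1 = castmx (esym hk, erefl 1%N) x *m a^T) /\
    (exists b : 'cV[R]_(k 1%N),
        (forall l l' : 'I_(k 1%N), b l 0 = b l' 0) /\ W 0%N = b *m x^T) /\
    (forall i : nat, (0 < i <= m)%N -> exists w : R, W i = const_mx w).
Proof.
move=> t; change (Inv hk x (gd phi hk gamma x W0 t)).
elim: t => [|t IH]; first by split; [|split].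
exact: Inv_step.
Qed.
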